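(* Let $d=|d|e^{i\theta}\in\mathbb{C}\setminus\{0\}$, $\xi\in\mathbb{C}$, $w_m=d(m+\xi)$ for $m=1,2,\dots$, and let $(\delta\omega_m)_{m\ge1}$ be complex numbers with $\delta\omega_m=O(m^{-\epsilon})$ for some $\epsilon>0$. Define $$\Delta(\omega)=\sum_{m=1}^{\infty}\left(\frac{1}{\omega-w_m}-\frac{1}{\omega-w_m-\delta\omega_m}\right).$$ Then for every $\varphi\in\mathbb{R}$ with $\varphi\not\equiv\theta\pmod{2\pi}$, the series converges for all sufficiently large $|\omega|$ on the ray $\arg\omega=\varphi$, and $$\lim_{r\to\infty} r\,\Delta(re^{i\varphi})=0.$$ *)

(* Defs.v *)
From Stdlib Require Import Reals.
From Coquelicot Require Import Coquelicot.
Open Scope R_scope.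

(* Sum of a complex series (componentwise real Series; equals the true sum
   whenever the complex series converges, cf. ex_series). *)
Definition CSeries (a : nat -> C) : C :=
  (Series (fun n => fst (a n)), Series (fun n => snd (a n))).

Definition cis (t : R) : C := (cos t, sin t).

Definition w (d xi : C) (m : nat) : C := Cmult d (Cplus (RtoC (INR m)) xi).

Definition pert_term (d xi : C) (dw : nat -> C) (om : C) (m : nat) : C :=
  Cminus (Cinv (Cminus om (w d xi m)))
         (Cinv (Cminus (Cminus om (w d xi m)) (dw m))).

(* Delta(om) = sum_{m>=1} pert_term m ; index n corresponds to m = n+1 *)
Definition pert_Delta (d xi : C) (dw : nat -> C) (om : C) : C :=
  CSeries (fun n => pert_term d xi dw om (S n)).

(* Main.v *)
Require Import Defs.
From Stdlib Require Import Reals Lra Lia Psatz.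
From Coquelicot Require Import Coquelicot.
Open Scope R_scope.

Lemma tele_sum (a : R) (n : nat) : 0 < a ->
  sum_n (fun k => 1 / (a + INR k) - 1 / (a + INR k + 1)) n = 1 / a - 1 / (a + INR n + 1).
Proof.
  intro Ha. induction n.
  - rewrite sum_O. simpl. rewrite Rplus_0_r. reflexivity.
  - rewrite sum_Sn, IHn, S_INR. unfold plus; simpl.
    replace (a + (INR n + 1)) with (a + INR n + 1) by ring. ring.
Qed.

Lemma tele_series (a : R) : 0 < a ->
  is_series (fun k => 1 / (a + INR k) - 1 / (a + INR k + 1)) (1 / a).
Proof.
  intro Ha.
  assert (H : is_lim_seq (fun n => 1 / a - 1 / (a + INR n + 1)) (1 / a - 0)).
  { apply is_lim_seq_minus'.
    - apply is_lim_seq_const.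
    - assert (H1 : is_lim_seq (fun n => a + INR n + 1) p_infty).
      { apply is_lim_seq_le_p_loc with INR. exists 0%nat. intros. lra.
        apply is_lim_seq_INR. }
      pose proof (is_lim_seq_inv _ _ H1) as H2.
      apply (is_lim_seq_ext (fun n => / (a + INR n + 1))).
      { intro n. unfold Rdiv. ring. }
      apply H2. discriminate. }
  rewrite Rminus_0_r in H.
  unfold is_series.
  apply (is_lim_seq_ext _ _ _ (fun n => eq_sym (tele_sum a n Ha))) in H.
  exact H.
Qed.

Definition gt (a : R) (k : nat) := 1 / (a + INR k) - 1 / (a + INR k + 1).

Lemma pw (x e C : R) : 0 < x -> 0 <= e <= C -> e / (x + 1)^2 <= C * (1/x - 1/(x+1)).
Proof.
  intros Hx He.
  replace (1/x - 1/(x+1)) with (/ (x * (x+1))) by (field; lra).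
  unfold Rdiv. apply Rmult_le_compat; try lra.
  - left. apply Rinv_0_lt_compat. nra.
  - apply Rinv_le_contravar; nra.
Qed.

Lemma gt_series a : 0 < a -> ex_series (gt a) /\ Series (gt a) = 1 / a.
Proof.
  intro Ha. pose proof (tele_series a Ha). split.
  - eexists; eauto.
  - apply is_series_unique; auto.
Qed.

Lemma key (e : nat -> R) (B : R) :
  (forall n, 0 <= e n <= B) ->
  (forall eta, 0 < eta -> exists M, forall n, (M <= n)%nat -> e n <= eta) ->
  (forall r, 0 < r -> ex_series (fun n => e n / (r + INR (S n))^2)) /\
  (forall eta, 0 < eta -> exists R1, forall r, R1 < r ->
      r * Series (fun n => e n / (r + INR (S n))^2) < eta).
Proof.
  intros He Hs.
  assert (Hex : forall r, 0 < r -> ex_series (fun n => e n / (r + INR (S n))^2)).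
  { intros r Hr.
    destruct (gt_series r Hr) as [Hg _].
    apply (@ex_series_le R_AbsRing R_CompleteNormedModule _ (fun n => B * gt r n)).
    - intro n. change norm with Rabs. rewrite Rabs_pos_eq.
      + unfold gt. rewrite S_INR, <- Rplus_assoc. apply pw.
        pose proof (pos_INR n); lra. apply He.
      + apply Rmult_le_pos. apply He. left. apply Rinv_0_lt_compat. apply pow_lt. pose proof (pos_INR (S n)); lra.
    - apply (ex_series_scal_l B (gt r)). exact Hg. }
  split; [exact Hex|].
  intros eta Heta.
  destruct (Hs (eta/2) ltac:(lra)) as [M HM].
  assert (HB : 0 <= B) by (pose proof (He 0%nat); lra).
  exists (Rmax 1 (4 * INR (S M) * B / eta)).
  intros r Hr.
  assert (Hr1 : 1 < r) by (pose proof (Rmax_l 1 (4 * INR (S M) * B / eta)); lra).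
  assert (Hr2 : 4 * INR (S M) * B / eta < r) by (pose proof (Rmax_r 1 (4 * INR (S M) * B / eta)); lra).
  set (a := fun n => e n / (r + INR (S n))^2).
  assert (Ha0 : forall n, 0 <= a n).
  { intro n. unfold a. apply Rmult_le_pos. apply He. left. apply Rinv_0_lt_compat.
    apply pow_lt. pose proof (pos_INR (S n)); lra. }
  rewrite (Series_incr_n a (S M)) by (lia || apply Hex; lra).
  simpl pred.
  assert (H1 : sum_f_R0 a M <= sum_f_R0 (fun _ => B / r^2) M).
  { apply sum_Rle. intros n _. unfold a. unfold Rdiv. apply Rmult_le_compat.
    apply He. left. apply Rinv_0_lt_compat. apply pow_lt. pose proof (pos_INR (S n)); lra.
    apply He. apply Rinv_le_contravar. apply pow_lt; lra.
    pose proof (pos_INR (S n)). apply pow_incr. lra. }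
  rewrite sum_cte in H1.
  set (a0 := r + INR (S M)).
  assert (Ha0p : 0 < a0) by (unfold a0; pose proof (pos_INR (S M)); lra).
  destruct (gt_series a0 Ha0p) as [Hg Hgs].
  assert (H2 : Series (fun k => a (S M + k)%nat) <= Series (fun k => (eta/2) * gt a0 k)).
  { apply Series_le.
    - intro k. split. apply Ha0.
      unfold a, gt, a0.
      replace (INR (S (S M + k))) with (r + INR (S M) + INR k + 1 - r)
        by (rewrite (S_INR (S M + k)), plus_INR; ring).
      replace (r + (r + INR (S M) + INR k + 1 - r)) with (r + INR (S M) + INR k + 1) by ring.
      apply pw. pose proof (pos_INR (S M)); pose proof (pos_INR k); lra.
      split. apply He. apply HM. lia.
    - apply (ex_series_scal_l (eta/2) (gt a0)). exact Hg. }
  rewrite Series_scal_l, Hgs in H2.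
  assert (H3 : 1 / a0 <= 1 / r).
  { unfold Rdiv. rewrite !Rmult_1_l. apply Rinv_le_contravar; [lra|].
    unfold a0; pose proof (pos_INR (S M)); lra. }
  set (s1 := sum_f_R0 a M) in *.
  set (s2 := Series (fun k => a (S M + k)%nat)) in *.
  assert (Hs1 : r * s1 <= INR (S M) * B / r).
  { apply Rle_trans with (r * (B / r ^ 2 * INR (S M))).
    apply Rmult_le_compat_l; lra. right. field. lra. }
  assert (Hs1' : INR (S M) * B / r < eta / 2).
  { assert (HX : 4 * INR (S M) * B < r * eta).
    { replace (4 * INR (S M) * B) with (4 * INR (S M) * B / eta * eta) by (field; lra).
      apply Rmult_lt_compat_r; lra. }
    apply (Rmult_lt_reg_r r). lra.
    replace (INR (S M) * B / r * r) with (INR (S M) * B) by (field; lra). nra. }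
  assert (Hs2 : r * s2 <= eta / 2).
  { apply Rle_trans with (r * (eta / 2 * (1 / r))).
    apply Rmult_le_compat_l. lra. apply Rle_trans with (eta/2 * (1/a0)). lra.
    apply Rmult_le_compat_l; lra. right. field. lra. }
  rewrite Rmult_plus_distr_l. lra.
Qed.

Lemma angle (phi theta : R) : (forall k : Z, phi <> theta + 2 * IZR k * PI) ->
  cos phi * cos theta + sin phi * sin theta < 1.
Proof.
  intro Hk. rewrite <- cos_minus.
  destruct (Rlt_or_le (cos (phi - theta)) 1) as [h|h]; [exact h|].
  exfalso. pose proof (COS_bound (phi - theta)) as [_ hb].
  set (a := (phi - theta) / 2).
  assert (Ha : cos (2 * a) = 1) by (unfold a; replace (2 * ((phi - theta) / 2)) with (phi - theta) by field; lra).
  rewrite cos_2a_sin in Ha.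
  assert (Hs : sin a = 0) by (apply Rsqr_0_uniq; unfold Rsqr; lra).
  destruct (sin_eq_0_0 a Hs) as [k Hk'].
  apply (Hk k). unfold a in Hk'. lra.
Qed.

Lemma geom (cu su cv sv : R) : cu^2+su^2=1 -> cv^2+sv^2=1 -> cu*cv+su*sv < 1 ->
  exists c, 0 < c /\ forall t s, 0 <= t -> 0 <= s ->
    c * (t + s) <= Cmod (t*cu - s*cv, t*su - s*sv).
Proof.
  intros Hu Hv Ha.
  set (al := cu*cv+su*sv) in *.
  assert (Hal : -1 <= al) by (unfold al; pose proof (pow2_ge_0 (cu+cv)); pose proof (pow2_ge_0 (su+sv)); nra).
  set (be := (1 - al) / 2).
  exists (sqrt be). split. apply sqrt_lt_R0. unfold be; lra.
  intros t s Ht Hs.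
  unfold Cmod. simpl fst; simpl snd.
  rewrite <- (sqrt_pow2 (sqrt be * (t + s))).
  2:{ apply Rmult_le_pos. apply sqrt_pos. lra. }
  apply sqrt_le_1_alt.
  rewrite Rpow_mult_distr, pow2_sqrt by (unfold be; lra).
  assert (E : (t*cu - s*cv)^2 + (t*su - s*sv)^2 = be * (t+s)^2 + (1 - be) * (t - s)^2).
  { unfold be. replace ((t*cu - s*cv)^2 + (t*su - s*sv)^2) with
      (t^2 * (cu^2+su^2) + s^2 * (cv^2+sv^2) - 2*t*s*al) by (unfold al; ring).
    rewrite Hu, Hv. clearbody al. field. }
  rewrite E. assert (0 <= 1 - be) by (unfold be; lra). pose proof (Rmult_le_pos _ _ H (pow2_ge_0 (t-s))). clearbody be al. lra.
Qed.

Lemma cs1 x : cos x ^ 2 + sin x ^ 2 = 1.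
Proof. rewrite <- (sin2_cos2 x). unfold Rsqr. ring. Qed.

Lemma cm_eq t s phi theta :
  Cminus (Cmult (RtoC t) (cis phi)) (Cmult (RtoC s) (cis theta)) =
  (t*cos phi - s*cos theta, t*sin phi - s*sin theta).
Proof. unfold Cminus, Cmult, Cplus, Copp, RtoC, cis. simpl. f_equal; ring. Qed.

Lemma rev_tri (x y : C) : Cmod x - Cmod y <= Cmod (Cminus x y).
Proof.
  pose proof (Cmod_triangle (Cminus x y) y) as H.
  replace (Cplus (Cminus x y) y) with x in H.
  lra. destruct x, y. unfold Cminus, Cplus, Copp. simpl. f_equal; ring.
Qed.

Lemma w_decomp d xi md v m : d = Cmult (RtoC md) v ->
  w d xi m = Cplus (Cmult (RtoC (md * INR m)) v) (Cmult d xi).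
Proof.
  intros ->. unfold w. destruct v, xi. unfold Cmult, Cplus, RtoC. simpl. f_equal; ring.
Qed.

Lemma om_decomp (r s : R) (u v P : C) :
  Cminus (Cmult (RtoC r) u) (Cplus (Cmult (RtoC s) v) P) =
  Cminus (Cminus (Cmult (RtoC r) u) (Cmult (RtoC s) v)) P.
Proof. destruct u, v, P. unfold Cminus, Cmult, Cplus, Copp, RtoC. simpl. f_equal; ring. Qed.

Lemma term_bound (a dl : C) (L : R) : 0 < L -> L <= Cmod a -> L <= Cmod (Cminus a dl) ->
  Cmod (Cminus (Cinv a) (Cinv (Cminus a dl))) <= Cmod dl / L ^ 2.
Proof.
  intros HL H1 H2.
  assert (Ha : a <> RtoC 0) by (apply Cmod_gt_0; lra).
  assert (Hb : Cminus a dl <> RtoC 0) by (apply Cmod_gt_0; lra).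
  replace (Cminus (Cinv a) (Cinv (Cminus a dl))) with
    (Cmult (Copp dl) (Cmult (Cinv a) (Cinv (Cminus a dl)))).
  2:{ field. split; auto. }
  rewrite !Cmod_mult, Cmod_opp, !Cmod_inv by auto.
  unfold Rdiv. apply Rmult_le_compat_l. apply Cmod_ge_0.
  simpl. rewrite Rmult_1_r, Rinv_mult.
  apply Rmult_le_compat; try (left; apply Rinv_0_lt_compat; lra);
  apply Rinv_le_contravar; lra.
Qed.

Lemma fin_bound (f : nat -> R) (M : nat) : exists B, 0 <= B /\ forall m, (m < M)%nat -> f m <= B.
Proof.
  induction M.
  - exists 0. split. lra. intros; lia.
  - destruct IHM as [B [HB HBm]]. exists (Rmax B (f M)). split.
    + apply Rle_trans with B; auto. apply Rmax_l.
    + intros m Hm. destruct (Nat.eq_dec m M) as [->|ne]. apply Rmax_r.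
      apply Rle_trans with B. apply HBm; lia. apply Rmax_l.
Qed.

Lemma rpow_le1 (x e : R) : 1 <= x -> 0 < e -> Rpower x (- e) <= 1.
Proof.
  intros Hx He. unfold Rpower. rewrite <- exp_0.
  destruct (Req_dec x 1) as [->|ne]. rewrite ln_1. right. f_equal. ring.
  left. apply exp_increasing.
  assert (0 < ln x) by (rewrite <- ln_1; apply ln_increasing; lra). nra.
Qed.

Lemma dw_bounds (dw : nat -> C) eps K N : 0 < eps ->
  (forall m, (1<=m)%nat -> N <= INR m -> Cmod (dw m) <= K * Rpower (INR m) (-eps)) ->
  (exists B, 0 <= B /\ forall m, (1<=m)%nat -> Cmod (dw m) <= B) /\
  (forall eta, 0 < eta -> exists M, forall m, (M <= m)%nat -> Cmod (dw m) <= eta).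
Proof.
  intros He HK. split.
  - destruct (INR_unbounded N) as [M0 HM0].
    destruct (fin_bound (fun m => Cmod (dw m)) M0) as [B0 [HB0 HB0m]].
    exists (Rmax B0 (Rabs K)). split. apply Rle_trans with B0; auto; apply Rmax_l.
    intros m Hm. destruct (Rle_or_lt N (INR m)) as [h|h].
    + apply Rle_trans with (K * Rpower (INR m) (- eps)). apply HK; auto.
      apply Rle_trans with (Rabs K). 
      assert (H1 : 1 <= INR m) by (apply (le_INR 1); auto).
      pose proof (rpow_le1 _ _ H1 He).
      assert (0 < Rpower (INR m) (-eps)) by (unfold Rpower; apply exp_pos).
      pose proof (Rle_abs K). pose proof (Rabs_pos K). nra.
      apply Rmax_r.
    + apply Rle_trans with B0. apply HB0m. apply INR_lt. lra. apply Rmax_l.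
  - intros eta Heta.
    set (K' := Rabs K + 1).
    assert (HK' : 0 < K') by (unfold K'; pose proof (Rabs_pos K); lra).
    set (X := ln (K' / eta) / eps).
    destruct (INR_unbounded (Rmax (Rmax N 1) (exp X))) as [M1 HM1].
    exists M1. intros m Hm.
    assert (Hm1 : INR M1 <= INR m) by (apply le_INR; auto).
    pose proof (Rmax_l (Rmax N 1) (exp X)). pose proof (Rmax_r (Rmax N 1) (exp X)).
    pose proof (Rmax_l N 1). pose proof (Rmax_r N 1).
    assert (Hm1' : (1 <= m)%nat) by (apply (INR_lt 0 m); simpl; lra).
    apply Rle_trans with (K * Rpower (INR m) (- eps)). apply HK; auto; lra.
    assert (HP : 0 < Rpower (INR m) (-eps)) by (unfold Rpower; apply exp_pos).
    apply Rle_trans with (K' * Rpower (INR m) (- eps)).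
    { apply Rmult_le_compat_r. lra. unfold K'. pose proof (Rle_abs K). lra. }
    assert (Hln : X < ln (INR m)).
    { rewrite <- (ln_exp X). apply ln_increasing. apply exp_pos. lra. }
    assert (Hlt : Rpower (INR m) (- eps) < eta / K').
    { unfold Rpower. replace (eta / K') with (exp (- (eps * X))).
      apply exp_increasing. nra.
      unfold X. replace (- (eps * (ln (K' / eta) / eps))) with (- ln (K'/eta)) by (field; lra).
      rewrite exp_Ropp, exp_ln. field. split; lra.
      apply Rdiv_lt_0_compat; lra. }
    left. apply Rlt_le_trans with (K' * (eta / K')). apply Rmult_lt_compat_l; lra.
    right. field. lra.
Qed.

Theorem mainTheorem7 (d xi : C) (theta : R) (dw : nat -> C) (eps : R) :
  d <> RtoC 0 ->
  d = Cmult (RtoC (Cmod d)) (cis theta) ->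
  0 < eps ->
  (* dw_m = O(m^{-eps}) as m -> oo *)
  (exists K N : R, forall m : nat, (1 <= m)%nat -> N <= INR m ->
      Cmod (dw m) <= K * Rpower (INR m) (- eps)) ->
  forall phi : R,
    (forall k : Z, phi <> theta + 2 * IZR k * PI) ->
    (exists R0 : R, forall r : R, R0 < r ->
        ex_series (fun n => pert_term d xi dw (Cmult (RtoC r) (cis phi)) (S n)))
    /\
    filterlim (fun r : R => Cmult (RtoC r) (pert_Delta d xi dw (Cmult (RtoC r) (cis phi))))
      (Rbar_locally p_infty) (locally (RtoC 0)).
Proof.
  intros Hd0 Hd Heps [K [N HKN]] phi Hphi.
  destruct (dw_bounds dw eps K N Heps HKN) as [[B [HB HBm]] Hsmall].
  assert (Hmd : 0 < Cmod d) by (apply Cmod_gt_0; exact Hd0).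
  destruct (geom (cos phi) (sin phi) (cos theta) (sin theta) (cs1 _) (cs1 _) (angle _ _ Hphi))
    as [c [Hc Hgeo]].
  set (P := Cmult d xi).
  set (A := Cmod P + B).
  assert (HA : 0 <= A) by (unfold A; pose proof (Cmod_ge_0 P); lra).
  set (c' := c / 2 * Rmin 1 (Cmod d)).
  assert (Hmin : 0 < Rmin 1 (Cmod d)) by (apply Rmin_glb_lt; lra).
  assert (Hc' : 0 < c') by (unfold c'; apply Rmult_lt_0_compat; lra).
  set (R0 := 2 * A / c + 1).
  assert (HR0 : 1 <= R0) by (unfold R0; assert (0 <= 2 * A / c) by (apply Rmult_le_pos; [lra | left; apply Rinv_0_lt_compat; lra]); lra).
  assert (Hpt : forall r, R0 < r -> forall n,
     Cmod (pert_term d xi dw (Cmult (RtoC r) (cis phi)) (S n)) <=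
     (Cmod (dw (S n)) / c'^2) / (r + INR (S n))^2).
  { intros r Hr n.
    assert (Hr0 : 0 < r) by lra.
    assert (Hcr : 2 * A < c * r).
    { assert (2 * A / c < r) by (unfold R0 in Hr; lra).
      replace (2 * A) with (2 * A / c * c) by (field; lra). nra. }
    set (m := S n).
    pose proof (pos_INR m) as Hm0.
    unfold pert_term.
    rewrite (w_decomp d xi (Cmod d) (cis theta) m Hd). fold P.
    rewrite om_decomp.
    set (L := c' * (r + INR m)).
    assert (HL : 0 < L) by (unfold L; apply Rmult_lt_0_compat; lra).
    replace (Cmod (dw m) / c' ^ 2 / (r + INR m) ^ 2) with (Cmod (dw m) / L ^ 2)
      by (unfold L; field; split; lra).
    pose proof (Hgeo r (Cmod d * INR m) ltac:(lra) ltac:(apply Rmult_le_pos; lra)) as Hg.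
    rewrite <- cm_eq in Hg.
    pose proof (rev_tri (Cminus (Cmult (RtoC r) (cis phi)) (Cmult (RtoC (Cmod d * INR m)) (cis theta))) P) as T1.
    set (a := Cminus (Cminus (Cmult (RtoC r) (cis phi)) (Cmult (RtoC (Cmod d * INR m)) (cis theta))) P) in *.
    pose proof (rev_tri a (dw m)) as T2.
    assert (Hdw : Cmod (dw m) <= B) by (apply HBm; unfold m; lia).
    assert (Hcore : L <= c * (r + Cmod d * INR m) - A).
    { unfold L, c'. pose proof (Rmin_l 1 (Cmod d)). pose proof (Rmin_r 1 (Cmod d)).
      assert (c / 2 * Rmin 1 (Cmod d) * r <= c / 2 * r).
      { rewrite Rmult_assoc. apply Rmult_le_compat_l. lra.
        rewrite <- (Rmult_1_l r) at 2. apply Rmult_le_compat_r; lra. }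
      assert (c / 2 * Rmin 1 (Cmod d) * INR m <= c * (Cmod d * INR m)).
      { replace (c * (Cmod d * INR m)) with (c / 2 * (2 * Cmod d) * INR m) by field.
        apply Rmult_le_compat_r. lra. apply Rmult_le_compat_l; lra. }
      nra. }
    apply term_bound; [exact HL | |]; unfold A in Hcore; lra. }
  assert (Hc2 : 0 < c' ^ 2) by (apply pow_lt; lra).
  destruct (key (fun n => Cmod (dw (S n)) / c'^2) (B / c'^2)) as [Hex Hlim].
  { intro n. split. apply Rmult_le_pos. apply Cmod_ge_0. left; apply Rinv_0_lt_compat; lra.
    apply Rmult_le_compat_r. left; apply Rinv_0_lt_compat; lra. apply HBm; lia. }
  { intros eta Heta. destruct (Hsmall (eta * c'^2)) as [M HM]. apply Rmult_lt_0_compat; lra.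
    exists M. intros n Hn. pose proof (HM (S n) ltac:(lia)).
    apply (Rmult_le_reg_r (c'^2)). lra. unfold Rdiv. rewrite Rmult_assoc, Rinv_l by lra. lra. }
  split.
  - exists R0. intros r Hr.
    apply (@ex_series_le C_AbsRing C_CompleteNormedModule _ (fun n => Cmod (dw (S n)) / c'^2 / (r + INR (S n))^2)).
    + intro n. exact (Hpt r Hr n).
    + apply Hex; lra.
  - apply filterlim_locally. intro eps0.
    destruct (Hlim eps0 (cond_pos eps0)) as [R1 HR1].
    exists (Rmax R0 R1). intros r Hr.
    pose proof (Rmax_l R0 R1). pose proof (Rmax_r R0 R1).
    set (b := fun n : nat => Cmod (dw (S n)) / c' ^ 2 / (r + INR (S n)) ^ 2).
    assert (HSb : r * Series b < eps0) by (apply HR1; lra).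
    assert (Hcomp : forall g : C -> R, (forall z, Rabs (g z) <= Cmod z) ->
      Rabs (Series (fun n => g (pert_term d xi dw (Cmult (RtoC r) (cis phi)) (S n)))) <= Series b).
    { intros g Hg.
      apply Rle_trans with (Series (fun n => Rabs (g (pert_term d xi dw (Cmult (RtoC r) (cis phi)) (S n))))).
      - apply Series_Rabs.
        apply (@ex_series_le R_AbsRing R_CompleteNormedModule _ b).
        + intro n. change norm with Rabs. rewrite Rabs_Rabsolu.
          apply Rle_trans with (1 := Hg _). apply Hpt. lra.
        + apply Hex; lra.
      - apply Series_le.
        + intro n. split. apply Rabs_pos. apply Rle_trans with (1 := Hg _). apply Hpt. lra.
        + apply Hex; lra. }
    assert (H1 := Hcomp fst (fun z => Rle_trans _ _ _ (Rmax_l _ _) (Rmax_Cmod z))).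
    assert (H2 := Hcomp snd (fun z => Rle_trans _ _ _ (Rmax_r _ _) (Rmax_Cmod z))).
    unfold pert_Delta, CSeries.
    set (S1 := Series (fun n => fst (pert_term d xi dw (Cmult (RtoC r) (cis phi)) (S n)))) in *.
    set (S2 := Series (fun n => snd (pert_term d xi dw (Cmult (RtoC r) (cis phi)) (S n)))) in *.
    clearbody S1 S2. clearbody b.
    assert (Hr0 : 0 < r) by lra.
    split; unfold ball; simpl; unfold AbsRing_ball, abs, minus, plus, opp; simpl.
    - replace (r * S1 - 0 * S2 + - 0) with (r * S1) by ring.
      rewrite Rabs_mult, (Rabs_pos_eq r) by lra.
      apply Rle_lt_trans with (r * Series b). apply Rmult_le_compat_l; lra. exact HSb.
    - replace (r * S2 + 0 * S1 + - 0) with (r * S2) by ring.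
      rewrite Rabs_mult, (Rabs_pos_eq r) by lra.
      apply Rle_lt_trans with (r * Series b). apply Rmult_le_compat_l; lra. exact HSb.
Qed.
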